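(* Let $G=(V,E)$ be an undirected graph with $n$ vertices and non-negative edge weights of maximum value $W$, let $K$ be a positive integer and $\varepsilon>0$. Let $B\subseteq V$ be obtained by including each vertex independently with probability $C\log(n)/K$, for a sufficiently large constant $C>0$. Consider the oracle that, on query $(s,t)$, returns $+\infty$ if $s$ and $t$ are in different connected components and otherwise returns $\min(\widehat d_1,\widehat d_2)$, where $\widehat d_1=\min\{d_{1/\varepsilon}(s,v)+d_{1/\varepsilon}(v,t): v\in A_{1/\varepsilon}(s)\cap A_{1/\varepsilon}(t)\}$ and $\widehat d_2=\min\{d(s,p(v))+d(p(v),t): v\in A_{1/\varepsilon}(s)\cup A_{1/\varepsilon}(t)\}$. Then with high probability, simultaneously for all queries $(s,t)\in V^2$, the returned value $\widehat d(s,t)$ satisfies $d(s,t)\le \widehat d(s,t)\le (1+\varepsilon)\,d(s,t)+2W$.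
   Context: $d(u,v)$ is the weighted distance in $G$. $K[v]$ is a set of the $K$ vertices closest to $v$ (including $v$; ties arbitrary). $H$ is the auxiliary graph on $V$ with, for each $v$, an edge (hop) from $v$ to each $v'\in K[v]\setminus\{v\}$ of weight $d(v,v')$, hops from $v$ going only to elements of $K[v]$. $A_{1/\varepsilon}(x)$ is the set of vertices reachable from $x$ in $H$ with at most $\lceil 1/\varepsilon\rceil$ hops. For $v\in A_{1/\varepsilon}(s)$, $d_{1/\varepsilon}(s,v)$ is the minimum total weight of a walk in $H$ from $s$ to $v$ with at most $\lceil1/\varepsilon\rceil$ hops; for $v\in A_{1/\varepsilon}(t)$, $d_{1/\varepsilon}(v,t)$ is the minimum total weight of such a walk from $t$ to $v$. $p(v)\in B$ denotes a pivot in $B$ closest to $v$ in $G$. ''With high probability'' means with probability at least $1-n^{-c}$ for some constant $c>0$. *)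

(* Defs.v *)
From HB Require Import structures.
From mathcomp Require Import all_boot all_order all_algebra.
From mathcomp Require Import all_classical all_reals all_analysis.
Set Implicit Arguments. Unset Strict Implicit. Unset Printing Implicit Defensive.
Import Order.TTheory GRing.Theory Num.Theory.
Local Open Scope ring_scope.
Local Open Scope classical_set_scope.

Section Defs.
Variables (R : realType) (V : finType).

(* total weight of the walk u = x0, x1, ..., xk = last u p, where p = [x1;...;xk] *)
Definition walk_weight (w : V -> V -> R) (u : V) (p : seq V) : R :=
  \sum_(e <- zip (u :: p) p) w e.1 e.2.

Definition dist (adj : rel V) (w : V -> V -> R) (u v : V) : \bar R :=
  ereal_inf [set (walk_weight w u p)%:E | p in [set p | path adj u p /\ last u p = v]].

Definition valid_Kset (adj : rel V) (w : V -> V -> R) (K : nat) (Ks : V -> {set V}) :=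
  forall v, [/\ v \in Ks v, #|Ks v| = minn K #|V| &
     forall x y, x \in Ks v -> y \notin Ks v -> (dist adj w v x <= dist adj w v y)%E].

Definition hop (Ks : V -> {set V}) : rel V := fun x y => (y \in Ks x) && (y != x).

Definition hwalk_weight adj w (x : V) (p : seq V) : \bar R :=
  (\sum_(e <- zip (x :: p) p) dist adj w e.1 e.2)%E.

Definition hwalks (Ks : V -> {set V}) (eps : R) (x : V) : set (seq V) :=
  [set p | path (hop Ks) x p /\ ((size p)%:Z <= Num.ceil (eps^-1))%R].

Definition Aset Ks eps (x : V) : set V := [set last x p | p in hwalks Ks eps x].

Definition dH adj w Ks eps (x v : V) : \bar R :=
  ereal_inf [set hwalk_weight adj w x p | p in [set p | hwalks Ks eps x p /\ last x p = v]].

Definition valid_pivot adj w (B : {set V}) (p : V -> option V) :=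
  forall v, match p v with
            | None => B = finset.set0
            | Some b => b \in B /\ forall b', b' \in B -> (dist adj w v b <= dist adj w v b')%E
            end.

Definition dpiv adj w (p : V -> option V) (x v : V) : \bar R :=
  if p v is Some b then dist adj w x b else +oo%E.

Definition dhat1 adj w Ks eps (s t : V) : \bar R :=
  ereal_inf [set (dH adj w Ks eps s v + dH adj w Ks eps t v)%E
            | v in Aset Ks eps s `&` Aset Ks eps t].

Definition dhat2 adj w Ks eps p (s t : V) : \bar R :=
  ereal_inf [set (dpiv adj w p s v + dpiv adj w p t v)%E
            | v in Aset Ks eps s `|` Aset Ks eps t].

Definition oracle adj w Ks eps p (s t : V) : \bar R :=
  if connect adj s t then Order.min (dhat1 adj w Ks eps s t) (dhat2 adj w Ks eps p s t)
  else +oo%E.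

Definition good_event adj w Ks eps (W : R) (B : {set V}) : Prop :=
  forall p, valid_pivot adj w B p -> forall s t : V,
    (dist adj w s t <= oracle adj w Ks eps p s t)%E /\
    (oracle adj w Ks eps p s t <= (1 + eps)%:E * dist adj w s t + (2 * W)%:E)%E.

(* probability that B, obtained by including each vertex independently with
   probability q, satisfies the predicate E *)
Definition sample_prob (q : R) (E : {set V} -> Prop) : R :=
  \sum_(B : {set V}) (if `[< E B >] then q ^+ #|B| * (1 - q) ^+ (#|V| - #|B|) else 0).

End Defs.

(* Main.v *)
Require Import Defs.
From HB Require Import structures.
From mathcomp Require Import all_boot all_order all_algebra.
From mathcomp Require Import all_classical all_reals all_analysis.
From mathcomp Require Import zify ring lra.
Set Implicit Arguments. Unset Strict Implicit. Unset Printing Implicit Defensive.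
Import Order.TTheory GRing.Theory Num.Theory.
Local Open Scope ring_scope.
Local Open Scope classical_set_scope.

Section Walks.
Variables (R : realType) (V : finType) (adj : rel V) (w : V -> V -> R) (W : R).
Hypothesis adj_sym : symmetric adj.
Hypothesis w_sym : forall u v, adj u v -> w u v = w v u.
Hypothesis w_ge0 : forall u v, adj u v -> 0 <= w u v.

Lemma walk_weight_cons u x p :
  walk_weight w u (x :: p) = w u x + walk_weight w x p.
Proof. by rewrite /walk_weight /= big_cons. Qed.

Lemma walk_weight_nil u : walk_weight w u [::] = 0.
Proof. by rewrite /walk_weight /= big_nil. Qed.

Lemma walk_weight_cat u p1 p2 :
  walk_weight w u (p1 ++ p2) = walk_weight w u p1 + walk_weight w (last u p1) p2.
Proof.
elim: p1 u => [|x p1 IH] u /=; first by rewrite walk_weight_nil add0r.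
by rewrite !walk_weight_cons IH addrA.
Qed.

Lemma walk_ge0 u p : path adj u p -> 0 <= walk_weight w u p.
Proof.
elim: p u => [|x p IH] u /=; first by rewrite walk_weight_nil.
move=> /andP[a pp]; rewrite walk_weight_cons addr_ge0 //; [exact: w_ge0|exact: IH].
Qed.

Lemma dist_le_walk u p : path adj u p ->
  (dist adj w u (last u p) <= (walk_weight w u p)%:E)%E.
Proof. by move=> pp; apply: ereal_inf_lbound; exists p. Qed.

Lemma dist_ge0 u v : (0 <= dist adj w u v)%E.
Proof.
apply: le_ereal_inf_tmp => _ [p [pp _] <-].
by rewrite lee_fin; exact: walk_ge0.
Qed.

Lemma dist_cases u v : dist adj w u v = +oo%E \/ exists r, dist adj w u v = r%:E.
Proof.
have := dist_ge0 u v; case: (dist adj w u v) => [r| |] //; by [right; exists r|left].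
Qed.

Lemma dist_near u v r e : dist adj w u v = r%:E -> 0 < e ->
  exists p, [/\ path adj u p, last u p = v & walk_weight w u p < r + e].
Proof.
move=> d e0; have : (dist adj w u v < (r + e)%:E)%E.
  by rewrite d lte_fin ltrDl.
by case/ereal_inf_lt => _ [p [pp lp] <-]; rewrite lte_fin => lt; exists p.
Qed.

Lemma dist_triangle a b c :
  (dist adj w a c <= dist adj w a b + dist adj w b c)%E.
Proof.
case: (dist_cases a b) => [->|[r1 d1]].
  by rewrite addye ?leey //; have := dist_ge0 b c; case: (dist adj w b c).
case: (dist_cases b c) => [->|[r2 d2]].
  by rewrite d1 addey ?leey.
rewrite d1 d2; apply/lee_addgt0Pr => e e0.
have e20 : 0 < e / 2 by rewrite divr_gt0.
have [p1 [pp1 lp1 w1]] := dist_near d1 e20.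
have [p2 [pp2 lp2 w2]] := dist_near d2 e20.
have := dist_le_walk (p := p1 ++ p2) (u := a).
rewrite cat_path last_cat lp1 pp1 pp2 lp2 => /(_ isT) H.
apply: (le_trans H); rewrite walk_weight_cat lp1 -!EFinD lee_fin.
have : walk_weight w a p1 + walk_weight w b p2 < r1 + e / 2 + (r2 + e / 2) by rewrite ltrD.
move/ltW/le_trans; apply; rewrite le_eqVlt; apply/orP; left; by apply/eqP; field.
Qed.

Lemma walk_rev u p : path adj u p -> exists q,
  [/\ path adj (last u p) q, last (last u p) q = u & walk_weight w (last u p) q = walk_weight w u p].
Proof.
elim: p u => [|x p IH] u /=; first by move=> _; exists [::].
move=> /andP[a /IH [q [pq lq wq]]]; exists (rcons q u); split.
- by rewrite rcons_path pq lq adj_sym.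
- by rewrite last_rcons.
- rewrite -cats1 walk_weight_cat lq wq !walk_weight_cons walk_weight_nil addr0.
  by rewrite (w_sym a) addrC.
Qed.

Lemma dist_sym_le u v : (dist adj w v u <= dist adj w u v)%E.
Proof.
apply: le_ereal_inf_tmp => _ [p [pp <-] <-].
have [q [pq lq wq]] := walk_rev pp.
by have := dist_le_walk pq; rewrite lq wq.
Qed.

Lemma dist_sym u v : dist adj w u v = dist adj w v u.
Proof. by apply/le_anti; rewrite !dist_sym_le. Qed.

Section Index.
Variables (f : nat -> V) (m : nat).
Hypothesis Hf : forall r, (r < m)%N -> adj (f r) (f r.+1).

Definition cw n := \sum_(0 <= r < n) w (f r) (f r.+1).

Lemma cw0 : cw 0 = 0.
Proof. by rewrite /cw big_geq. Qed.

Lemma cwS r : cw r.+1 = cw r + w (f r) (f r.+1).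
Proof. by rewrite /cw big_nat_recr. Qed.

Lemma seg_walk i d : (i + d <= m)%N ->
  [/\ path adj (f i) (map f (iota i.+1 d)),
      last (f i) (map f (iota i.+1 d)) = f (i + d) &
      walk_weight w (f i) (map f (iota i.+1 d)) = cw (i + d) - cw i].
Proof.
elim: d i => [|d IH] i le.
  by rewrite addn0 /= walk_weight_nil subrr.
have [p1 l1 w1] : _ := IH i.+1 ltac:(by rewrite addSnnS).
rewrite /= -addSnnS; split.
- by rewrite p1 andbT; apply: Hf; lia.
- by rewrite l1.
- by rewrite walk_weight_cons w1 cwS; ring.
Qed.

Lemma dist_seg i j : (i <= j <= m)%N ->
  (dist adj w (f i) (f j) <= (cw j - cw i)%:E)%E.
Proof.
move=> /andP[ij jm]; have := seg_walk (i := i) (d := j - i); rewrite subnKC //.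
by case/(_ jm) => p l <-; have := dist_le_walk p; rewrite l.
Qed.

Lemma cw_mono i j : (i <= j <= m)%N -> cw i <= cw j.
Proof.
move=> /andP[ij jm]; have := seg_walk (i := i) (d := j - i); rewrite subnKC //.
by case/(_ jm) => p _ wq; rewrite -subr_ge0 -wq; apply: walk_ge0.
Qed.

End Index.

Section Hops.
Variables (Ks : V -> {set V}).

Lemma hwalk_weight_cons x y p :
  hwalk_weight adj w x (y :: p) = (dist adj w x y + hwalk_weight adj w y p)%E.
Proof. by rewrite /hwalk_weight /= big_cons. Qed.

Lemma hwalk_weight_nil x : hwalk_weight adj w x [::] = 0%E.
Proof. by rewrite /hwalk_weight /= big_nil. Qed.

Lemma hwalk_weight_rcons x p y :
  hwalk_weight adj w x (rcons p y) = (hwalk_weight adj w x p + dist adj w (last x p) y)%E.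
Proof.
elim: p x => [|z p IH] x /=.
  by rewrite hwalk_weight_cons !hwalk_weight_nil add0e adde0.
by rewrite !hwalk_weight_cons IH addeA.
Qed.

Lemma hop_chain (x : nat -> V) (h : nat -> R) i :
  (forall r, (r < i)%N -> x r.+1 \in Ks (x r)) ->
  (forall r, (r < i)%N -> (dist adj w (x r) (x r.+1) <= (h r.+1 - h r)%:E)%E) ->
  exists p, [/\ path (hop Ks) (x 0%N) p, (size p <= i)%N, last (x 0%N) p = x i &
    (hwalk_weight adj w (x 0%N) p <= (h i - h 0%N)%:E)%E].
Proof.
elim: i => [|i IH] Hin Hd.
  by exists [::]; rewrite hwalk_weight_nil subrr.
have [p [pp sp lp wp]] := IH (fun r lt => Hin r (ltnW lt)) (fun r lt => Hd r (ltnW lt)).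
have hi : (0 <= (h i.+1 - h i)%:E)%E.
  by apply: le_trans (Hd i (ltnSn i)); apply: dist_ge0.
have wle : (hwalk_weight adj w (x 0%N) p + (h i.+1 - h i)%:E <= (h i.+1 - h 0%N)%:E)%E.
  apply: le_trans (leeD wp (lexx _)) _; rewrite -EFinD lee_fin.
  by rewrite le_eqVlt; apply/orP; left; apply/eqP; ring.
case: (eqVneq (x i.+1) (x i)) => [eq|ne].
  exists p; split => //; first by apply: leqW.
    by rewrite lp eq.
  by apply: le_trans wle; apply: leeDl.
exists (rcons p (x i.+1)); split.
- by rewrite rcons_path pp lp /hop Hin // ne.
- by rewrite size_rcons.
- by rewrite last_rcons.
- rewrite hwalk_weight_rcons lp; apply: le_trans wle.
  by apply: leeD2l; apply: Hd.
Qed.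

Lemma chain_A eps u p :
  0 < eps -> path (hop Ks) u p -> (size p <= `|Num.ceil eps^-1|)%N ->
  Aset Ks eps u (last u p) /\
  (dH adj w Ks eps u (last u p) <= hwalk_weight adj w u p)%E.
Proof.
move=> e0 pp sp.
have hw : hwalks Ks eps u p.
  split => //; apply: (le_trans (y := (`|Num.ceil eps^-1|%N)%:Z)); first by rewrite lez_nat.
  rewrite gez0_abs // ceil_ge0; apply: lt_le_trans (ltrN10 R) _.
  by rewrite invr_ge0 ltW.
split; first by exists p.
by apply: ereal_inf_lbound; exists p.
Qed.

Section Steps.
Variables (f : nat -> V).

Fixpoint fwd (x : V) (j n : nat) : nat :=
  if n is n'.+1 then (if f j.+1 \in Ks x then fwd x j.+1 n' else j) else j.

Fixpoint bwd (x : V) (j n : nat) : nat :=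
  if n is n'.+1 then (if f j.-1 \in Ks x then bwd x j.-1 n' else j) else j.

Lemma fwd_bounds x j n : (j <= fwd x j n <= j + n)%N.
Proof.
elim: n j => [|n IH] j /=; first by lia.
case: ifP => _; last by lia.
by have := IH j.+1; lia.
Qed.

Lemma fwd_in x j n r : (j < r <= fwd x j n)%N -> f r \in Ks x.
Proof.
elim: n j => [|n IH] j /=; first by lia.
case: ifP => H; last by lia.
move=> /andP[jr rf]; case: (eqVneq r j.+1) => [->//|/eqP ne].
by apply: (IH j.+1); lia.
Qed.

Lemma fwd_stuck x j n : (fwd x j n < j + n)%N -> f (fwd x j n).+1 \notin Ks x.
Proof.
elim: n j => [|n IH] j /=; first by lia.
case: ifP => H; last by rewrite H.
by move=> lt; apply: (IH j.+1); lia.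
Qed.

Lemma bwd_bounds x j n : (n <= j)%N -> (j - n <= bwd x j n <= j)%N.
Proof.
elim: n j => [|n IH] j /=; first by lia.
move=> nj; case: ifP => _; last by lia.
by have := IH j.-1; lia.
Qed.

Lemma bwd_in x j n r : (n <= j)%N -> (bwd x j n <= r < j)%N -> f r \in Ks x.
Proof.
elim: n j => [|n IH] j /=; first by lia.
move=> nj; case: ifP => H; last by lia.
move=> /andP[br rj]; case: (eqVneq r j.-1) => [->//|/eqP ne].
by apply: (IH j.-1); lia.
Qed.

Lemma bwd_stuck x j n : (n <= j)%N -> (j - n < bwd x j n)%N -> f (bwd x j n).-1 \notin Ks x.
Proof.
elim: n j => [|n IH] j /=; first by lia.
move=> nj; case: ifP => H; last by rewrite H.
by move=> lt; apply: (IH j.-1); lia.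
Qed.

End Steps.

Definition goodB (B : {set V}) :=
  forall x, (exists y, y \notin Ks x) -> exists b0, b0 \in Ks x /\ b0 \in B.

Lemma pivot_case K eps (B : {set V}) (p : V -> option V) s t x y (al be h : R) :
  valid_Kset adj w K Ks -> goodB B -> valid_pivot adj w B p ->
  (Aset Ks eps s `|` Aset Ks eps t) x -> y \notin Ks x ->
  (dist adj w x y <= h%:E)%E -> (dist adj w s x <= al%:E)%E -> (dist adj w t x <= be%:E)%E ->
  (dhat2 adj w Ks eps p s t <= (al + be + 2 * h)%:E)%E.
Proof.
move=> vK gB vp Ax yK dxy dsx dtx.
apply: le_trans (_ : (dpiv adj w p s x + dpiv adj w p t x <= _)%E).
  by apply: ereal_inf_lbound; exists x.
have [b0 [b0K b0B]] := gB x (ex_intro _ y yK).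
have := vp x; rewrite /dpiv; case: (p x) => [b [bB bmin]|B0]; last first.
  by move: b0B; rewrite B0 inE.
have dxb : (dist adj w x b <= h%:E)%E.
  apply: le_trans (bmin _ b0B) _; apply: le_trans _ dxy.
  by have [_ _ ] := vK x; apply.
have e1 : (dist adj w s b <= (al + h)%:E)%E.
  by apply: le_trans (dist_triangle s x b) _; rewrite EFinD; apply: leeD.
have e2 : (dist adj w t b <= (be + h)%:E)%E.
  by apply: le_trans (dist_triangle t x b) _; rewrite EFinD; apply: leeD.
apply: le_trans (leeD e1 e2) _; rewrite -EFinD lee_fin.
by rewrite le_eqVlt; apply/orP; left; apply/eqP; ring.
Qed.

Section Main.
Variables (f : nat -> V) (m K : nat) (eps : R) (B : {set V}) (p : V -> option V).
Hypothesis Hf : forall r, (r < m)%N -> adj (f r) (f r.+1).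
Hypothesis HW : forall u v, adj u v -> w u v <= W.
Hypothesis e0 : 0 < eps.
Hypothesis vK : valid_Kset adj w K Ks.
Hypothesis gB : goodB B.
Hypothesis vp : valid_pivot adj w B p.

Let k := `|Num.ceil eps^-1|%N.
Let F j := fwd f (f j) j (m - j).
Let Bk j := bwd f (f j) j j.
Let a i := iter i F 0%N.
Let b i := iter i Bk m.

Lemma k_gt0 : (0 < k)%N.
Proof.
rewrite /k; have : (0 < Num.ceil eps^-1)%R by rewrite ceil_gt0 invr_gt0.
by case: (Num.ceil eps^-1) => // n; rewrite ltz_nat.
Qed.

Lemma k_eps : 1 <= k%:R * eps.
Proof.
have c0 : (0 <= Num.ceil eps^-1)%R by rewrite ceil_ge0; apply: lt_le_trans (ltrN10 R) _; rewrite invr_ge0 ltW.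
have : eps^-1 <= k%:R.
  apply: le_trans (ceil_ge _) _; rewrite /k.
  by rewrite -[X in (X%:~R <= _)%R]gez0_abs // natr_absz ger0_norm // intr_ge0.
by rewrite -ler_pdivrMr // div1r.
Qed.

Lemma a_le i : (a i <= m)%N.
Proof.
elim: i => [|i IH] //=; rewrite -/(a i) /F.
by have := fwd_bounds f (f (a i)) (a i) (m - a i); lia.
Qed.

Lemma a_mono i : (a i <= a i.+1)%N.
Proof. by rewrite /= -/(a i) /F; have := fwd_bounds f (f (a i)) (a i) (m - a i); lia. Qed.

Lemma a_in i r : (a i <= r <= a i.+1)%N -> f r \in Ks (f (a i)).
Proof.
case: (eqVneq r (a i)) => [->|/eqP ne]; first by have [] := vK (f (a i)).
have -> : a i.+1 = fwd f (f (a i)) (a i) (m - a i) by [].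
move=> H; apply: (fwd_in (j := a i) (n := m - a i)); lia.
Qed.

Lemma a_stuck i : (a i.+1 < m)%N -> f (a i.+1).+1 \notin Ks (f (a i)).
Proof.
rewrite /= -/(a i) /F => H; apply: fwd_stuck.
by have := a_le i; lia.
Qed.

Lemma b_le i : (b i <= m)%N.
Proof.
elim: i => [|i IH] //=; rewrite -/(b i) /Bk.
by have := bwd_bounds f (f (b i)) (leqnn (b i)); lia.
Qed.

Lemma b_mono i : (b i.+1 <= b i)%N.
Proof. by rewrite /= -/(b i) /Bk; have := bwd_bounds f (f (b i)) (leqnn (b i)); lia. Qed.

Lemma b_in i r : (b i.+1 <= r <= b i)%N -> f r \in Ks (f (b i)).
Proof.
case: (eqVneq r (b i)) => [->|/eqP ne]; first by have [] := vK (f (b i)).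
have -> : b i.+1 = bwd f (f (b i)) (b i) (b i) by [].
move=> H; apply: (bwd_in (n := b i) (j := b i)) => //; lia.
Qed.

Lemma b_stuck i : (0 < b i.+1)%N -> f (b i.+1).-1 \notin Ks (f (b i)).
Proof.
rewrite /= -/(b i) /Bk => H; apply: bwd_stuck => //; lia.
Qed.


Lemma a_chain i : (i <= k)%N ->
  Aset Ks eps (f 0%N) (f (a i)) /\ (dH adj w Ks eps (f 0%N) (f (a i)) <= (cw f (a i))%:E)%E.
Proof.
move=> ik.
have [q [pq sq lq wq]] := @hop_chain (fun r => f (a r)) (fun r => cw f (a r)) i
  (fun r _ => a_in (i := r) (r := a r.+1) ltac:(by rewrite leqnn a_mono))
  (fun r _ => dist_seg Hf (i := a r) (j := a r.+1) ltac:(by rewrite a_mono a_le)).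
have [A1 D1] := chain_A e0 pq (leq_trans sq ik).
rewrite lq in A1 D1; split => //; apply: le_trans D1 _; apply: le_trans wq _.
by rewrite /= cw0 subr0.
Qed.

Lemma b_chain j : (j <= k)%N ->
  Aset Ks eps (f m) (f (b j)) /\ (dH adj w Ks eps (f m) (f (b j)) <= (cw f m - cw f (b j))%:E)%E.
Proof.
move=> jk.
have H2 : forall r, (r < j)%N -> (dist adj w (f (b r)) (f (b r.+1)) <=
   ((cw f m - cw f (b r.+1)) - (cw f m - cw f (b r)))%:E)%E.
  move=> r _; rewrite dist_sym.
  have -> : (cw f m - cw f (b r.+1)) - (cw f m - cw f (b r)) = cw f (b r) - cw f (b r.+1) by ring.
  by apply: (dist_seg Hf); rewrite b_mono b_le.
have [q [pq sq lq wq]] := @hop_chain (fun r => f (b r)) (fun r => cw f m - cw f (b r)) j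
  (fun r _ => b_in (i := r) (r := b r.+1) ltac:(by rewrite leqnn b_mono)) H2.
have [A1 D1] := chain_A e0 pq (leq_trans sq jk).
rewrite lq in A1 D1; split => //; apply: le_trans D1 _; apply: le_trans wq _.
by rewrite /= subrr subr0.
Qed.

Lemma meet_case i j : (i < k)%N -> (j <= k)%N -> (a i <= b j <= a i.+1)%N ->
  (dhat1 adj w Ks eps (f 0%N) (f m) <= (cw f m)%:E)%E.
Proof.
move=> ik jk H.
pose x r := f (if (r <= i)%N then a r else b j).
pose h r := cw f (if (r <= i)%N then a r else b j).
have H1 : forall r, (r < i.+1)%N -> x r.+1 \in Ks (x r).
  move=> r lt; rewrite /x (_ : (r <= i)%N = true); last by lia.
  case: ifP => H'; first by apply: a_in; rewrite leqnn a_mono.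
  have -> : r = i by lia.
  by apply: a_in.
have H2 : forall r, (r < i.+1)%N -> (dist adj w (x r) (x r.+1) <= (h r.+1 - h r)%:E)%E.
  move=> r lt; rewrite /x /h (_ : (r <= i)%N = true); last by lia.
  case: ifP => H'.
    by apply: (dist_seg Hf); rewrite a_mono a_le.
  have -> : r = i by lia.
  by apply: (dist_seg Hf); move: H; rewrite b_le; lia.
have [q [pq sq lq wq]] := @hop_chain x h i.+1 H1 H2.
have [A1 D1] := chain_A e0 pq (leq_trans sq ik).
have ex : x i.+1 = f (b j) by rewrite /x ltnn.
have eh : h i.+1 - h 0%N = cw f (b j) by rewrite /h ltnn /= cw0 subr0.
rewrite lq ex in A1 D1; rewrite eh in wq.
have [A2 D2] := b_chain jk.
apply: le_trans (_ : (dH adj w Ks eps (f 0%N) (f (b j)) + dH adj w Ks eps (f m) (f (b j)) <= _)%E).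
  by apply: ereal_inf_lbound; exists (f (b j)).
apply: le_trans (leeD (le_trans D1 wq) D2) _.
by rewrite -EFinD lee_fin subrKC.
Qed.

Hypothesis W0 : 0 <= W.

Let delta := cw f m / (2 * k%:R).

Lemma cwm_ge0 : 0 <= cw f m.
Proof. by have := cw_mono Hf (i := 0) (j := m) (leqnn m); rewrite cw0; apply. Qed.

Lemma two_delta : 2 * delta <= eps * cw f m.
Proof.
have kp : 0 < k%:R :> R by rewrite ltr0n k_gt0.
have kn : k%:R != 0 :> R by rewrite lt0r_neq0.
have -> : 2 * delta = cw f m / k%:R by rewrite /delta; field.
rewrite ler_pdivrMr //; have := k_eps; have := cwm_ge0; nra.
Qed.

Lemma final_arith (X : \bar R) :
  (X <= (cw f m + 2 * (delta + W))%:E)%E -> (X <= ((1 + eps) * cw f m + 2 * W)%:E)%E.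
Proof.
move=> H; apply: le_trans H _; rewrite lee_fin.
have := two_delta; lra.
Qed.

Lemma main_bound :
  (oracle adj w Ks eps p (f 0%N) (f m) <= ((1 + eps) * cw f m + 2 * W)%:E)%E.
Proof.
have conn : connect adj (f 0%N) (f m).
  have [pq lq _] := seg_walk Hf (i := 0) (d := m) (leqnn m).
  by apply/connectP; exists (map f (iota 1 m)).
rewrite /oracle conn ge_min.
have kp := k_gt0.
have [[i [j [ik jk H]]]|NM] := pselect (exists i j, [/\ (i < k)%N, (j <= k)%N & (a i <= b j <= a i.+1)%N]).
  apply/orP; left; apply: le_trans (meet_case ik jk H) _; rewrite lee_fin.
  have := cwm_ge0 => c0; have : 0 <= eps * cw f m by rewrite mulr_ge0 // ltW.
  rewrite mulrDl mul1r => ?; have := W0 => ?; lra.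
apply/orP; right.
have L1 : forall j, (j <= k)%N -> forall i, (i <= k)%N -> (a i <= b j)%N.
  move=> j jk; elim => [|i IH] ik //.
  have Hi := IH (ltnW ik).
  case: (leqP (a i.+1) (b j)) => // lt.
  by exfalso; apply: NM; exists i, j; split => //; rewrite Hi ltnW.
have L2 : forall i j, (i < k)%N -> (j <= k)%N -> (a i.+1 < b j)%N.
  move=> i j ik jk; rewrite ltnNge; apply/negP => Hb.
  by apply: NM; exists i, j; split => //; rewrite Hb L1 // ltnW.
set k1 := k.-1; have ek : k = k1.+1 by rewrite /k1 prednK.
have Sa : forall i, (i < k)%N -> (a i.+1 < m)%N.
  by move=> i ik; apply: leq_trans (L2 i k ik (leqnn k)) (b_le k).
have Sb : forall j, (j < k)%N -> (0 < b j.+1)%N.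
  move=> j jk; have := L2 k1 j.+1 ltac:(lia) ltac:(lia); lia.
have small : (exists2 i, (i < k)%N & cw f (a i.+1) - cw f (a i) <= delta) \/
             (exists2 j, (j < k)%N & cw f (b j) - cw f (b j.+1) <= delta).
  case: (pselect (exists2 i, (i < k)%N & cw f (a i.+1) - cw f (a i) <= delta)) => [?|NA]; [by left|right].
  case: (pselect (exists2 j, (j < k)%N & cw f (b j) - cw f (b j.+1) <= delta)) => [//|NB]; exfalso.
  have HA : forall i, (i < k)%N -> delta < cw f (a i.+1) - cw f (a i).
    by move=> i ik; rewrite ltNge; apply/negP => H; apply: NA; exists i.
  have HB : forall j, (j < k)%N -> delta < cw f (b j) - cw f (b j.+1).
    by move=> j jk; rewrite ltNge; apply/negP => H; apply: NB; exists j.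
  have CA : forall i, (i <= k)%N -> i%:R * delta <= cw f (a i).
    elim => [|i IH] ik; first by rewrite mul0r /= cw0.
    have := IH (ltnW ik); have := HA i ik; rewrite -natr1 mulrDl mul1r; lra.
  have CB : forall j, (j <= k)%N -> j%:R * delta <= cw f m - cw f (b j).
    elim => [|j IH] jk; first by rewrite mul0r /= subrr.
    have := IH (ltnW jk); have := HB j jk; rewrite -natr1 mulrDl mul1r; lra.
  have ak : k%:R * delta < cw f (a k).
    rewrite ek -natr1 mulrDl mul1r.
    have := CA k1 ltac:(lia); have := HA k1 ltac:(lia); lra.
  have bk : k%:R * delta < cw f m - cw f (b k).
    rewrite ek -natr1 mulrDl mul1r.
    have := CB k1 ltac:(lia); have := HB k1 ltac:(lia); lra.
  have mono : cw f (a k) <= cw f (b k).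
    by apply: (cw_mono Hf); rewrite L1 ?b_le.
  have kn : k%:R != 0 :> R by rewrite pnatr_eq0 -lt0n.
  have e2 : k%:R * delta * 2 = cw f m by rewrite /delta; field.
  move: ak bk mono e2; generalize (k%:R * delta) => z; lra.
case: small => [[i ik Hs]|[j jk Hs]].
  apply: final_arith.
  apply: le_trans (pivot_case (K := K) (x := f (a i)) (y := f (a i.+1).+1) (h := delta + W)
     (al := cw f (a i)) (be := cw f m - cw f (a i)) vK gB vp _ _ _ _ _) _.
  - by left; exact: (a_chain (ltnW ik)).1.
  - exact: a_stuck (Sa i ik).
  - apply: le_trans (dist_seg Hf (i := a i) (j := (a i.+1).+1) _) _.
      by have := a_mono i; have := Sa i ik; lia.
    rewrite lee_fin cwS; have := HW (Hf (Sa i ik)); lra.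
  - apply: le_trans (dist_seg Hf (i := 0) (j := a i) _) _; first by rewrite a_le.
    by rewrite cw0 subr0.
  - by rewrite dist_sym; apply: (dist_seg Hf); rewrite a_le leqnn.
  - by rewrite lee_fin le_eqVlt; apply/orP; left; apply/eqP; ring.
apply: final_arith.
have bp := Sb j jk.
apply: le_trans (pivot_case (K := K) (x := f (b j)) (y := f (b j.+1).-1) (h := delta + W)
   (al := cw f (b j)) (be := cw f m - cw f (b j)) vK gB vp _ _ _ _ _) _.
- by right; exact: (b_chain (ltnW jk)).1.
- exact: b_stuck bp.
- rewrite dist_sym; apply: le_trans (dist_seg Hf (i := (b j.+1).-1) (j := b j) _) _.
    by have := b_mono j; have := b_le j; lia.
  have em : b j.+1 = ((b j.+1).-1).+1 by rewrite prednK.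
  have Hw := HW (Hf (r := (b j.+1).-1) ltac:(have := b_le j.+1; lia)).
  have := cwS f (b j.+1).-1; rewrite -em => ce.
  rewrite lee_fin; rewrite -em in Hw; lra.
- apply: le_trans (dist_seg Hf (i := 0) (j := b j) _) _; first by rewrite b_le.
  by rewrite cw0 subr0.
- by rewrite dist_sym; apply: (dist_seg Hf); rewrite b_le leqnn.
- by rewrite lee_fin le_eqVlt; apply/orP; left; apply/eqP; ring.
Qed.

End Main.

Lemma hwalk_ge_dist x q : (dist adj w x (last x q) <= hwalk_weight adj w x q)%E.
Proof.
elim: q x => [|y q IH] x /=.
  by rewrite hwalk_weight_nil; have := dist_le_walk (u := x) (p := [::]) isT; rewrite walk_weight_nil.
rewrite hwalk_weight_cons; apply: le_trans (dist_triangle x y _) _.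
by apply: leeD2l; apply: IH.
Qed.

Lemma dist_le_dH eps x v : (dist adj w x v <= dH adj w Ks eps x v)%E.
Proof.
by apply: le_ereal_inf_tmp => _ [q [_ <-] <-]; apply: hwalk_ge_dist.
Qed.

Lemma lower_bound eps p s t : (dist adj w s t <= oracle adj w Ks eps p s t)%E.
Proof.
rewrite /oracle; case: ifP => _; last by apply: leey.
rewrite le_min; apply/andP; split.
  apply: le_ereal_inf_tmp => _ [v _ <-].
  apply: le_trans (dist_triangle s v t) _; rewrite (dist_sym v t).
  by apply: leeD; apply: dist_le_dH.
apply: le_ereal_inf_tmp => _ [v _ <-]; rewrite /dpiv; case: (p v) => [b|]; last by rewrite leey.
by apply: le_trans (dist_triangle s b t) _; rewrite (dist_sym b t).
Qed.

Lemma map_nth_iota1 (s : V) q : map (nth s (s :: q)) (iota 1 (size q)) = q.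
Proof.
rewrite -[1%N]addn0 iotaDl -map_comp.
by rewrite (eq_map (g := nth s q)) // -[X in _ = X](mkseq_nth s q).
Qed.


Lemma upper_bound K eps B p s t :
  (forall u v, adj u v -> w u v <= W) -> 0 < eps -> 0 <= W ->
  valid_Kset adj w K Ks -> goodB B -> valid_pivot adj w B p ->
  (oracle adj w Ks eps p s t <= (1 + eps)%:E * dist adj w s t + (2 * W)%:E)%E.
Proof.
move=> HW e0 W0 vK gB vp.
have ep : (0 < (1 + eps)%:E)%E by rewrite lte_fin; lra.
case: (boolP (connect adj s t)) => conn; last first.
  have dinf : dist adj w s t = +oo%E.
    rewrite /dist; have -> : [set (walk_weight w s q)%:E | q in [set q | path adj s q /\ last s q = t]] = set0.
      apply/seteqP; split => // x [q [pq lq] _].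
      by case/negP: conn; apply/connectP; exists q.
    by rewrite ereal_inf0.
  by rewrite /oracle (negbTE conn) dinf gt0_muley // addye.
case: (dist_cases s t) => [->|[r dr]].
  by rewrite gt0_muley // addye // leey.
rewrite dr; apply/lee_addgt0Pr => e e0'.
have e1 : 0 < e / (1 + eps) by rewrite divr_gt0 //; lra.
have [q [pq lq wq]] := dist_near dr e1.
pose f := nth s (s :: q).
have Hf : forall r, (r < size q)%N -> adj (f r) (f r.+1).
  by move=> i lt; move/pathP: pq => /(_ s i lt).
have := main_bound (f := f) (m := size q) (K := K) (B := B) Hf HW e0 vK gB vp W0.
have -> : f 0%N = s by [].
have -> : f (size q) = t.
  by rewrite -lq /f; have := nth_last s (s :: q); rewrite /=.
have [_ _] := seg_walk Hf (i := 0) (d := size q) (leqnn _).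
rewrite map_nth_iota1 add0n cw0 subr0 => <-.
move=> H; apply: le_trans H _; rewrite -EFinM -!EFinD lee_fin.
have : (1 + eps) * walk_weight w s q <= (1 + eps) * (r + e / (1 + eps)).
  by rewrite ler_wpM2l ?ltW //; lra.
have -> : (1 + eps) * (r + e / (1 + eps)) = (1 + eps) * r + e.
  by field; lra.
lra.
Qed.

End Hops.
End Walks.

Local Close Scope classical_set_scope.

Section Prob.
Variables (R : realType) (V : finType) (q : R).
Hypothesis q0 : 0 <= q.
Hypothesis q1 : q <= 1.

Definition pr (B : {set V}) : R := \prod_(x : V) (if x \in B then q else 1 - q).

Lemma pr_eq (B : {set V}) : q ^+ #|B| * (1 - q) ^+ (#|V| - #|B|) = pr B.
Proof.
rewrite /pr (bigID (fun x => x \in B)) /=.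
rewrite (eq_bigr (fun _ => q)); last by move=> x ->.
rewrite [X in _ = _ * X](eq_bigr (fun _ => 1 - q)); last by move=> x xB; rewrite (negbTE xB).
rewrite prodr_const.
have -> : \prod_(i | i \notin B) (1 - q) = (1 - q) ^+ #|[predC B]|.
  by rewrite -prodr_const.
by rewrite -(cardC B) addKn.
Qed.

Lemma pr_ge0 (B : {set V}) : 0 <= pr B.
Proof. by apply: prodr_ge0 => x _; case: ifP => _; rewrite ?subr_ge0. Qed.

Lemma sum_prod (F G : V -> R) :
  \sum_(B : {set V}) \prod_(x : V) (if x \in B then F x else G x) = \prod_(x : V) (F x + G x).
Proof. by rewrite (bigA_distr 1 +%R F G). Qed.

Lemma sum_pr : \sum_(B : {set V}) pr B = 1.
Proof.
rewrite /pr sum_prod (eq_bigr (fun _ => 1)) ?prodr_const ?expr1n // => x _.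
by rewrite addrC subrK.
Qed.

Lemma sp_eq (E : {set V} -> Prop) :
  sample_prob q E = \sum_(B : {set V}) (if `[< E B >] then pr B else 0).
Proof. by apply: eq_bigr => B _; rewrite pr_eq. Qed.

Lemma sp_mono (E1 E2 : {set V} -> Prop) : (forall B, E1 B -> E2 B) ->
  sample_prob q E1 <= sample_prob q E2.
Proof.
move=> H; rewrite !sp_eq; apply: ler_sum => B _.
case: (asboolP (E1 B)) => e1; first by rewrite asboolT //; apply: H.
by case: ifP => _; [apply: pr_ge0|].
Qed.

Lemma sp_disjoint (S : {set V}) :
  sample_prob q (fun B => [disjoint S & B]) = (1 - q) ^+ #|S|.
Proof.
rewrite sp_eq.
rewrite (eq_bigr (fun B : {set V} => \prod_(x : V) (if x \in B then (if x \in S then 0 else q) else 1 - q))).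
  rewrite sum_prod (eq_bigr (fun x => if x \in S then 1 - q else 1)); last first.
    by move=> x _; case: ifP => _; [rewrite add0r|rewrite addrC subrK].
  by rewrite -big_mkcond prodr_const.
move=> B _; case: (asboolP [disjoint S & B]) => dis.
  apply: eq_bigr => x _; case: ifP => // xB.
  by rewrite (disjointFl dis xB).
have [x [xS xB]] : exists x, x \in S /\ x \in B.
  have : S :&: B != finset.set0 by rewrite setI_eq0; apply/negP.
  by case/set0Pn => x; rewrite inE => /andP[xS xB]; exists x.
rewrite (bigD1 x) //= xS xB mul0r //.
Qed.

Lemma union_bound (E : {set V} -> Prop) (bad : V -> {set V} -> Prop) :
  (forall B, (forall x, ~ bad x B) -> E B) ->
  1 - \sum_(x : V) sample_prob q (bad x) <= sample_prob q E.
Proof.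
move=> H; under eq_bigr => x _ do rewrite sp_eq.
rewrite sp_eq exchange_big /= -sum_pr -sumrB; apply: ler_sum => B _.
have s0 : 0 <= \sum_(x : V) (if `[< bad x B >] then pr B else 0).
  by apply: sumr_ge0 => x _; case: ifP => _ //; apply: pr_ge0.
case: (asboolP (E B)) => eB.
  by rewrite lerBlDr lerDl.
have [x bx] : exists x, bad x B.
  by apply: contra_notP eB => nex; apply: H => x bx; apply: nex; exists x.
rewrite (bigD1 x) //= asboolT // opprD addrA subrr add0r oppr_le0.
by apply: sumr_ge0 => y _; case: ifP => _ //; apply: pr_ge0.
Qed.

End Prob.

Theorem lemma9 (R : realType) :
  exists C0 : R, 0 < C0 /\
  forall C : R, C0 <= C ->
  exists c : R, 0 < c /\
  forall (V : finType) (adj : rel V) (w : V -> V -> R) (W : R) (K : nat) (eps : R),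
    symmetric adj ->
    (forall u v, adj u v -> w u v = w v u) ->
    (forall u v, adj u v -> 0 <= w u v <= W) ->
    0 <= W ->
    (0 < K)%N ->
    0 < eps ->
    forall Ks : V -> {set V}, valid_Kset adj w K Ks ->
    sample_prob (Num.min 1 (C * ln (#|V|%:R) / K%:R)) (good_event adj w Ks eps W)
      >= 1 - (#|V|%:R) `^ (- c).
Proof.
exists 2; split => // C C2; exists (C - 1); split; first by lra.
move=> V adj w W K eps asym wsym wW W0 K0 e0 Ks vK.
have w0 : forall u v, adj u v -> 0 <= w u v by move=> u v /wW /andP[].
have wle : forall u v, adj u v -> w u v <= W by move=> u v /wW /andP[].
set n := #|V|.
set X := C * ln n%:R / K%:R.
set q := Num.min 1 X.
have Kp : 0 < K%:R :> R by rewrite ltr0n.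
have lnn0 : 0 <= ln (n%:R : R).
  case: (posnP n) => [->|np]; first by rewrite ln0.
  by apply: ln_ge0; rewrite ler1n.
have X0 : 0 <= X.
  by rewrite /X; apply: divr_ge0; [apply: mulr_ge0 => //; lra | exact: ltW].
have q0 : 0 <= q by rewrite /q le_min ler01 X0.
have q1 : q <= 1 by rewrite /q ge_min lexx.
pose bad x (B : {set V}) := (exists y, y \notin Ks x) /\ [disjoint Ks x & B].
have UB := @union_bound R V q q0 q1 (good_event adj w Ks eps W) bad.
have step1 : 1 - \sum_(x : V) sample_prob q (bad x) <= sample_prob q (good_event adj w Ks eps W).
  apply: UB => B nb p vp s t.
  have gB : goodB Ks B.
    move=> x ey; case: (pselect [disjoint Ks x & B]) => dis.
      by exfalso; apply: (nb x).
    have : Ks x :&: B != finset.set0 by rewrite setI_eq0; apply/negP.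
    by case/set0Pn => b; rewrite inE => /andP[bK bB]; exists b.
  split; first by apply: lower_bound.
  by apply: (upper_bound asym wsym w0 (K := K) (B := B)).
have step2 : forall x, sample_prob q (bad x) <= (1 - q) ^+ K.
  move=> x; case: (pselect (exists y, y \notin Ks x)) => [[y yK]|ney]; last first.
    rewrite sp_eq big1; first by rewrite exprn_ge0 // subr_ge0.
    by move=> B _; rewrite asboolF // => -[ey _].
  apply: le_trans (sp_mono q0 q1 (E2 := fun B => [disjoint Ks x & B]) _) _.
    by move=> B [].
  rewrite sp_disjoint //.
  have [_ cK _] := vK x.
  have lt : (#|Ks x| < n)%N.
    rewrite /n -cardsT; apply: proper_card; rewrite properT.
    by apply/negP => /eqP eT; move: yK; rewrite eT inE.
  have -> : #|Ks x| = K by move: lt; rewrite cK; lia.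
  by [].
have step3 : \sum_(x : V) sample_prob q (bad x) <= n%:R * (1 - q) ^+ K.
  apply: le_trans (ler_sum _ (fun x _ => step2 x)) _.
  rewrite (eq_bigl (fun x => x \in [set: V])); last by move=> x; rewrite inE.
  by rewrite sumr_const cardsT mulr_natl.
have step4 : n%:R * (1 - q) ^+ K <= (n%:R : R) `^ (- (C - 1)).
  case: (posnP n) => [->|np]; first by rewrite mul0r powR_ge0.
  case: (lerP 1 X) => X1.
    have -> : q = 1 by rewrite /q; apply/min_idPl.
    by rewrite subrr expr0n gtn_eqF // mulr0 powR_ge0.
  have -> : q = X by rewrite /q; apply/min_idPr; apply: ltW.
  have h1 : (1 - X) ^+ K <= expR (- X) ^+ K.
    apply: lerXn2r; rewrite ?nnegrE ?expR_ge0 //; first by lra.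
    by have := expR_ge1Dx (- X); rewrite addrC.
  have h2 : expR (- X) ^+ K = expR (- (C * ln n%:R)).
    rewrite -expRM_natr; congr expR; rewrite /X; field; lra.
  have n0 : (0 < n%:R :> R) by rewrite ltr0n.
  apply: le_trans (ler_wpM2l (ler0n _ _) h1) _.
  rewrite h2 /powR gt_eqF // -{1}(lnK n0) -expRD.
  by rewrite le_eqVlt; apply/orP; left; apply/eqP; congr expR; ring.
have := le_trans step3 step4 => h.
apply: le_trans step1; lra.
Qed.
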